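(* There exist two model phylogenetic networks $N_3$ and $N_4$ on $S=\{1,\dots,13\}$, both of class I (no pair of distinct convergent nodes), such that $N_3\not\cong N_4$ but $\theta_{AB}(N_3)=\theta_{AB}(N_4)$.
   Context: A DAG $N=(V,E)$ is labeled in a finite set $S$ if its leaves (nodes of out-degree 0) are bijectively labeled by $S$; leaves are identified with their labels. Isomorphism ($\cong$) of labeled DAGs means isomorphism of directed graphs preserving leaf labels. A path $u\rightsquigarrow v$ is a sequence of nodes $u=v_0,\dots,v_k=v$ with $(v_{i-1},v_i)\in E$. A model phylogenetic network on $S$ is a rooted DAG labeled in $S$ whose nodes are classified as tree nodes or hybrid nodes, such that: the root and every internal tree node have out-degree 2; every hybrid node has out-degree 1 and in-degree 2 (allo-polyploid) or in-degree 1 (auto-polyploid), and every node of in-degree 2 is hybrid while all other nodes with in-degree $\neq 1$ are tree nodes; the child of a hybrid node is always a tree node; and strong time consistency holds: an arc is a tree arc if its head is a tree node and a network arc if its head is hybrid; if $x,y$ are nodes for which there exists a sequence $(v_0,\dots,v_k)$ with $v_0=x$, $v_k=y$ such that for every $i$ either $(v_i,v_{i+1})$ is an arc of $N$ or $(v_{i+1},v_i)$ is a network arc of $N$, and at least one pair $(v_i,v_{i+1})$ is a tree arc of $N$, then $x$ and $y$ do not have a hybrid child in common. For a node $u$: $C(u)$ is the set of leaves descending from $u$; $A(u)$ the set of leaves $s$ such that every path from the root to $s$ contains $u$; $B(u)=C(u)\setminus A(u)$. For an arc $e=(u,v)$, $\theta_{AB}(e)=(A(v),B(v),S\setminus C(v))$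 where each leaf $s\in A(v)\cup B(v)$ is weighted by the maximum number of hybrid nodes in a path from $v$ to $s$ (including $v$ and $s$); $\theta_{AB}(N)=\{\theta_{AB}(e)\mid e\in E\}$. Two nodes $u,v$ are convergent if for every leaf $s$ and every $k\ge 0$, there is a path $u\rightsquigarrow s$ containing exactly $k$ hybrid nodes if and only if there is a path $v\rightsquigarrow s$ containing exactly $k$ hybrid nodes. The network is of class I if it contains no pair of (distinct) convergent nodes. *)

(* Defs.v *)
From mathcomp Require Import all_boot.
Set Implicit Arguments. Unset Strict Implicit. Unset Printing Implicit Defensive.

(* A finite DAG labelled in S, with nodes 'I_n, arc relation E, a tree/hybrid
   classification (hyb v = true iff v is a hybrid node), a distinguished root
   and an injective leaf labelling lbl : S -> nodes. *)
Record network (S : finType) := Network {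
  nV : nat;
  arc : rel 'I_nV;
  hyb : pred 'I_nV;
  root : 'I_nV;
  lbl : S -> 'I_nV
}.

Section Defs.
Variable S : finType.
Variable N : network S.

Local Notation V := 'I_(nV N).
Local Notation E := (@arc S N).
Local Notation H := (@hyb S N).

Definition indeg (v : V) : nat := #|[pred u : V | E u v]|.
Definition outdeg (v : V) : nat := #|[pred w : V | E v w]|.
Definition is_leaf (v : V) : bool := outdeg v == 0.

(* p is a path u ~> v : the node sequence is u :: p *)
Definition dpath (u v : V) (p : seq V) : Prop := path E u p /\ last u p = v.

Definition hcount (u : V) (p : seq V) : nat := count H (u :: p).

Definition acyclic : Prop :=
  forall (u : V) (p : seq V), p <> [::] -> ~ dpath u u p.

Definition labelled_rooted_dag : Prop :=
  [/\ acyclic,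
      indeg (root N) = 0,
      (forall v : V, v <> root N -> 0 < indeg v),
      injective (lbl N)
    & (forall v : V, is_leaf v <-> exists s : S, lbl N s = v)].

(* the step relation of strong time consistency: follow an arc forwards, or a
   network arc (arc whose head is hybrid) backwards *)
Definition tc_step (x y : V) : bool := E x y || (E y x && H x).
Definition tree_arc (x y : V) : bool := E x y && ~~ H y.

Definition strong_time_consistent : Prop :=
  forall (x y : V) (p : seq V),
    path tc_step x p -> last x p = y ->
    has (fun ab => tree_arc ab.1 ab.2) (zip (x :: p) p) ->
    ~ (exists h : V, [/\ H h, E x h & E y h]).

Definition degree_conditions : Prop :=
  [/\ outdeg (root N) = 2,
      (forall v : V, ~~ H v -> ~~ is_leaf v -> outdeg v = 2),
      (forall v : V, H v -> outdeg v = 1 /\ (indeg v = 1 \/ indeg v = 2)),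
      (forall v : V, indeg v = 2 -> H v)
    & (forall v : V, ~~ H v -> indeg v <= 1)].

Definition model_network : Prop :=
  [/\ labelled_rooted_dag,
      degree_conditions,
      (forall u v : V, H u -> E u v -> ~~ H v)
    & strong_time_consistent].

Definition inC (u : V) (s : S) : Prop := exists p, dpath u (lbl N s) p.
Definition inA (u : V) (s : S) : Prop :=
  forall p, dpath (root N) (lbl N s) p -> u \in root N :: p.
Definition inB (u : V) (s : S) : Prop := inC u s /\ ~ inA u s.

Definition max_hyb (v : V) (s : S) (w : nat) : Prop :=
  (exists p, dpath v (lbl N s) p /\ hcount v p = w) /\
  (forall p, dpath v (lbl N s) p -> hcount v p <= w).

(* theta_AB of an arc with head v: the triple (A(v), B(v), S \ C(v)) together
   with the weights of the leaves of A(v) u B(v) (weight recorded as 0 outside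
   C(v), where it carries no information). *)
Definition theta_of (v : V)
  (t : {set S} * {set S} * {set S} * {ffun S -> nat}) : Prop :=
  let: (a, b, c, w) := t in
  [/\ (forall s, s \in a <-> inA v s),
      (forall s, s \in b <-> inB v s),
      (forall s, s \in c <-> ~ inC v s),
      (forall s, inC v s -> max_hyb v s (w s))
    & (forall s, ~ inC v s -> w s = 0)].

Definition in_thetaAB (t : {set S} * {set S} * {set S} * {ffun S -> nat}) : Prop :=
  exists u v : V, E u v /\ theta_of v t.

Definition convergent (u v : V) : Prop :=
  forall (s : S) (k : nat),
    (exists p, dpath u (lbl N s) p /\ hcount u p = k) <->
    (exists p, dpath v (lbl N s) p /\ hcount v p = k).

Definition classI : Prop := forall u v : V, convergent u v -> u = v.

End Defs.

Definition net_iso (S : finType) (N1 N2 : network S) : Prop :=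
  exists f : 'I_(nV N1) -> 'I_(nV N2),
    [/\ bijective f,
        (forall u v, @arc S N1 u v = @arc S N2 (f u) (f v))
      & (forall s, f (lbl N1 s) = lbl N2 s)].

(* Main.v *)
Require Import Defs.
From mathcomp Require Import all_boot.
Set Implicit Arguments. Unset Strict Implicit. Unset Printing Implicit Defensive.

Lemma card_val n (P : pred nat) : #|[pred u : 'I_n | P (nat_of_ord u)]| = count P (iota 0 n).
Proof.
by rewrite cardE size_filter -(val_enum_ord n) count_map enumT.
Qed.

Lemma max_in (l : seq nat) : l != [::] -> foldr maxn 0 l \in l.
Proof.
elim: l => // a [|b l] IH _; first by rewrite /= maxn0 mem_seq1.
have := IH isT; rewrite [foldr _ _ (a :: _)]/=.
set M := foldr maxn 0 (b :: l).
case: (leqP a M) => h hin.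
  by rewrite in_cons hin orbT.
by rewrite in_cons eqxx.
Qed.

Lemma max_ge (l : seq nat) x : x \in l -> x <= foldr maxn 0 l.
Proof.
elim: l => // a l IH; rewrite in_cons => /orP [/eqP -> | h] /=; rewrite leq_max.
  by rewrite leqnn.
by rewrite IH ?orbT.
Qed.

Lemma uniq_map_in (T1 T2 : eqType) (f : T1 -> T2) s a b :
  uniq (map f s) -> a \in s -> b \in s -> f a = f b -> a = b.
Proof.
elim: s => // x s IH /= /andP [nx us]; rewrite !in_cons.
case/orP => [/eqP -> | ha]; case/orP => [/eqP -> | hb] // e.
- by move: nx; rewrite e map_f.
- by move: nx; rewrite -e map_f.
- exact: IH.
Qed.

Lemma max_hyb_uniq S (N : network S) v s w1 w2 :
  @max_hyb S N v s w1 -> @max_hyb S N v s w2 -> w1 = w2.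
Proof.
move=> [[p1 [d1 e1]] b1] [[p2 [d2 e2]] b2].
apply/eqP; rewrite eqn_leq; apply/andP; split; [rewrite -e1; exact: b2 | rewrite -e2; exact: b1].
Qed.

Lemma iso_inC S (N1 N2 : network S) (f : 'I_(nV N1) -> 'I_(nV N2)) :
  (forall u v, @Defs.arc S N1 u v = @Defs.arc S N2 (f u) (f v)) -> (forall s, f (@lbl S N1 s) = @lbl S N2 s) ->
  forall u s, @inC S N1 u s -> @inC S N2 (f u) s.
Proof.
move=> Ha Hl u s [p [pp lp]]; exists (map f p); split.
  rewrite path_map; rewrite (@eq_path _ _ (@Defs.arc S N1)) // => a b /=; by rewrite Ha.
by rewrite last_map lp Hl.
Qed.

Lemma iso_inC' S (N1 N2 : network S) (f : 'I_(nV N1) -> 'I_(nV N2)) :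
  bijective f -> (forall u v, @Defs.arc S N1 u v = @Defs.arc S N2 (f u) (f v)) -> (forall s, f (@lbl S N1 s) = @lbl S N2 s) ->
  forall u s, @inC S N1 u s <-> @inC S N2 (f u) s.
Proof.
move=> [g fK gK] Ha Hl u s; split; first exact: iso_inC.
move=> h; rewrite -(fK u); apply: (@iso_inC S N2 N1 g) h.
  by move=> a b; rewrite -{1}(gK a) -{1}(gK b) Ha.
by move=> t; rewrite -Hl fK.
Qed.

Section Bridge.
Variables (m n : nat) (Hmn : m <= n) (ch : seq (seq nat)) (hl : seq nat) (r : 'I_n) (rk : seq nat).

Definition arcN (u v : nat) : bool := v \in nth [::] ch u.
Definition hybN (u : nat) : bool := u \in hl.
Definition rkN u := nth 0 rk u.

Definition net : network 'I_m :=
  @Network 'I_m n (fun u v : 'I_n => arcN u v) (fun u : 'I_n => hybN u) r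
    (fun s => widen_ord Hmn s).

Local Notation V := 'I_n.
Local Notation E := (@Defs.arc _ net).

Fixpoint allp k u : seq (seq nat) :=
  if k is k'.+1 then [::] :: flatten [seq [seq v :: q | q <- allp k' v] | v <- nth [::] ch u]
  else [::].

Lemma allpP k u q : (q \in allp k u) = path arcN u q && (size q < k).
Proof.
elim: k u q => [|k IH] u [|v q] //=; first by rewrite andbF.
rewrite inE /= ltnS; apply/idP/idP.
  case/flatten_mapP => w wch /mapP [q' q'in [-> ->]].
  by move: q'in; rewrite IH /arcN wch.
case/andP => /andP [a pq] sz; apply/flatten_mapP; exists v => //.
by apply/map_f; rewrite IH pq.
Qed.

Hypothesis ch_bound : all (fun l => all (fun v => v < n) l) ch.
Hypothesis rk_ok : all (fun u => all (fun v => rkN v < rkN u) (nth [::] ch u)) (iota 0 n).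

Lemma arcN_bound u v : arcN u v -> v < n.
Proof.
rewrite /arcN; case: (ltnP u (size ch)) => hu; last by rewrite nth_default.
move=> hv; have /allP h := allP ch_bound _ (mem_nth [::] hu); exact: h.
Qed.

Lemma arcN_rk u v : u < n -> arcN u v -> rkN v < rkN u.
Proof.
move=> hu; have := allP rk_ok u; rewrite mem_iota /= => /(_ hu)/allP; apply.
Qed.

Lemma path_rk x q : x < n -> path arcN x q -> size q + rkN (last x q) <= rkN x.
Proof.
elim: q x => [|v q IH] x hx /=; first by rewrite add0n.
case/andP => a pq; have hv := arcN_bound a.
rewrite addSn; exact: leq_ltn_trans (IH v hv pq) (arcN_rk hx a).
Qed.

Lemma lift_path (x : V) q : path arcN (val x) q -> exists p : seq V, path E x p /\ map val p = q.
Proof.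
elim: q x => [|v q IH] x /=; first by exists [::].
case/andP => a pq; have hv := arcN_bound a.
have [p [pp ep]] := IH (Ordinal hv) pq.
by exists (Ordinal hv :: p); split => /=; [rewrite pp andbT | rewrite ep].
Qed.

Lemma path_val (x : V) p : path E x p = path arcN (val x) (map val p).
Proof. by rewrite path_map. Qed.

Definition F u := allp (rkN u).+1 u.

Lemma F_mem (x : V) q : q \in F (val x) <-> exists p : seq V, path E x p /\ map val p = q.
Proof.
rewrite allpP; split.
  by case/andP => pq _; apply: lift_path.
move=> [p [pp <-]]; have pp' : path arcN (val x) (map val p) by rewrite -path_val.
rewrite pp' /= ltnS; have h := path_rk (ltn_ord x) pp'.
by apply: leq_trans h; rewrite leq_addr.
Qed.

Lemma memI (x : V) : val x \in iota 0 n.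
Proof. by rewrite mem_iota add0n ltn_ord. Qed.

Lemma allV (P : pred nat) : all P (iota 0 n) -> forall v : V, P (val v).
Proof. by move/allP => h v; apply: h; apply: memI. Qed.

Lemma exF (x : V) (P : pred (seq nat)) :
  (exists p : seq V, path E x p /\ P (map val p)) <-> has P (F (val x)).
Proof.
split.
  move=> [p [pp hp]]; apply/hasP; exists (map val p) => //; apply/F_mem; by exists p.
case/hasP => q /F_mem [p [pp ep]] hq; exists p; split => //; by rewrite ep.
Qed.

Lemma allF (x : V) (P : pred (seq nat)) :
  (forall p : seq V, path E x p -> P (map val p)) <-> all P (F (val x)).
Proof.
split.
  move=> h; apply/allP => q /F_mem [p [pp <-]]; exact: h.
move=> /allP h p pp; apply: h; apply/F_mem; by exists p.
Qed.

Definition hcN u q := count hybN (u :: q).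

Lemma hcount_val (x : V) p : @hcount _ net x p = hcN (val x) (map val p).
Proof. by rewrite /hcount /hcN -map_cons count_map. Qed.

Lemma lastv (x : V) p : val (last x p) = last (val x) (map val p).
Proof. by rewrite last_map. Qed.

Lemma dpath_lbl (v : V) (s : 'I_m) p :
  @dpath _ net v (@lbl _ net s) p <-> path E v p /\ last (val v) (map val p) == val s.
Proof.
rewrite /dpath -lastv; split => [[pp lp] | [pp /eqP lp]]; split => //.
  by rewrite lp.
by apply: val_inj.
Qed.

Definition CN u s := has (fun q => last u q == s) (F u).

Lemma inC_iff (v : V) (s : 'I_m) : @inC _ net v s <-> CN (val v) (val s).
Proof.
split.
  move=> [p /dpath_lbl [pp lp]]; apply/(exF v (fun q => last (val v) q == val s)).
  by exists p.
move/(exF v (fun q => last (val v) q == val s)) => [p [pp lp]]; exists p; exact/dpath_lbl.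
Qed.

Definition PK u s k := has (fun q => (last u q == s) && (hcN u q == k)) (F u).

Lemma pk_iff (v : V) (s : 'I_m) k :
  (exists p, @dpath _ net v (@lbl _ net s) p /\ @hcount _ net v p = k) <-> PK (val v) (val s) k.
Proof.
split.
  move=> [p [/dpath_lbl [pp lp] hc]].
  apply/(exF v (fun q => (last (val v) q == val s) && (hcN (val v) q == k))).
  by exists p; split => //; rewrite lp -hcount_val hc eqxx.
move/(exF v (fun q => (last (val v) q == val s) && (hcN (val v) q == k))).
move=> [p [pp /andP [lp /eqP hc]]]; exists p; split; first exact/dpath_lbl.
by rewrite hcount_val.
Qed.

Definition AN u s := all (fun q => (last (val r) q == s) ==> (u \in val r :: q)) (F (val r)).

Lemma inA_iff (v : V) (s : 'I_m) : @inA _ net v s <-> AN (val v) (val s).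
Proof.
split.
  move=> h; apply/(allF r (fun q => (last (val r) q == val s) ==> (val v \in val r :: q))).
  move=> p pp; apply/implyP => lp.
  have := h p (iffRL (dpath_lbl r s p) (conj pp lp)).
  by rewrite -map_cons (mem_map val_inj).
move/(allF r (fun q => (last (val r) q == val s) ==> (val v \in val r :: q))) => h p.
move/dpath_lbl => [pp lp]; have := h p pp; rewrite lp /= -map_cons (mem_map val_inj).
done.
Qed.

Definition wN u s := foldr maxn 0 [seq hcN u q | q <- F u & last u q == s].

Lemma maxhyb_iff (v : V) (s : 'I_m) :
  CN (val v) (val s) -> @max_hyb _ net v s (wN (val v) (val s)).
Proof.
move=> hc; split.
  have : [seq hcN (val v) q | q <- F (val v) & last (val v) q == val s] != [::].
    by rewrite -size_eq0 size_map size_filter -lt0n -has_count.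
  move/max_in/mapP => [q]; rewrite mem_filter => /andP [lq /F_mem [p [pp ep]]] hq.
  exists p; split; first by apply/dpath_lbl; rewrite ep.
  by rewrite hcount_val ep /wN hq.
move=> p /dpath_lbl [pp lp]; rewrite hcount_val; apply: max_ge; apply/mapP.
exists (map val p) => //.
rewrite mem_filter lp; apply/F_mem; by exists p.
Qed.


Definition thetaG (T : seq (bool * bool * nat)) :
  {set 'I_m} * {set 'I_m} * {set 'I_m} * {ffun 'I_m -> nat} :=
  let d := (false, false, 0) in
  ([set s : 'I_m | (nth d T s).1.1],
   [set s : 'I_m | (nth d T s).1.2 && ~~ (nth d T s).1.1],
   [set s : 'I_m | ~~ (nth d T s).1.2],
   [ffun s : 'I_m => if (nth d T s).1.2 then (nth d T s).2 else 0]).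

Definition thN u := [seq (AN u s, CN u s, wN u s) | s <- iota 0 m].

Lemma thN_nth u (s : 'I_m) : nth (false, false, 0) (thN u) s = (AN u s, CN u s, wN u s).
Proof. by rewrite (nth_map 0) ?size_iota // nth_iota. Qed.

Lemma theta_ofE (v : V) t : @theta_of _ net v t <-> t = thetaG (thN (val v)).
Proof.
rewrite /thetaG; case: t => [[[a b] c] w]; split.
  move=> [Ha Hb Hc Hw H0]; congr (_, _, _, _).
  - apply/setP => s; rewrite inE thN_nth /=.
    by apply/idP/idP => [/Ha/inA_iff | /inA_iff/Ha].
  - apply/setP => s; rewrite inE thN_nth /=; apply/idP/idP.
      move/Hb => [hc ha]; rewrite (iffLR (inC_iff v s) hc) /=.
      by apply/negP => /inA_iff.
    case/andP => hc ha; apply/Hb; split; first exact/inC_iff.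
    by move/inA_iff; apply/negP.
  - apply/setP => s; rewrite inE thN_nth /=; apply/idP/idP.
      by move/Hc => h; apply/negP => /inC_iff.
    by move=> h; apply/Hc => /inC_iff; apply/negP.
  - apply/ffunP => s; rewrite ffunE thN_nth /=; case: ifP => hc.
      by apply: max_hyb_uniq (Hw s _) (maxhyb_iff hc); apply/inC_iff.
    by apply: H0 => /inC_iff; rewrite hc.
case=> -> -> -> ->; split => s; rewrite ?inE ?ffunE thN_nth /=.
- exact: (iff_sym (inA_iff v s)).
- split.
    case/andP => hc ha; split; first exact/inC_iff.
    by move/inA_iff; apply/negP.
  move=> [hc ha]; rewrite (iffLR (inC_iff v s) hc) /=.
  by apply/negP => /inA_iff.
- split.
    by move=> h /inC_iff; apply/negP.
  by move=> h; apply/negP => /inC_iff.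
- by move/inC_iff => hc; rewrite hc; apply: maxhyb_iff.
- by move=> h; case: ifP => // /inC_iff.
Qed.

Lemma in_thetaAB_iff t : in_thetaAB net t <->
  exists v : V, has (fun u => arcN u (val v)) (iota 0 n) /\ t = thetaG (thN (val v)).
Proof.
split.
  move=> [u [v [a h]]]; exists v; split; last exact/theta_ofE.
  by apply/hasP; exists (val u) => //; apply: memI.
move=> [v [/hasP [u hu a] e]].
have hu' : u < n by move: hu; rewrite mem_iota.
by exists (Ordinal hu'), v; split => //; apply/theta_ofE.
Qed.

Lemma acyclicN : acyclic net.
Proof.
move=> u p hp [pp lp].
have pp' : path arcN (val u) (map val p) by rewrite -path_val.
have := path_rk (ltn_ord u) pp'; rewrite -lastv lp size_map.
by move: hp; case: p {pp pp' lp} => // a p _ /=; rewrite addSn ltnNge leq_addl.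
Qed.

Definition indegN v := count (fun u => arcN u v) (iota 0 n).
Definition outdegN v := count (arcN v) (iota 0 n).

Lemma indegE (v : V) : @indeg _ net v = indegN (val v).
Proof. exact: (@card_val n (fun u => arcN u (val v))). Qed.

Lemma outdegE (v : V) : @outdeg _ net v = outdegN (val v).
Proof. exact: (@card_val n (arcN (val v))). Qed.

Definition deg_check :=
  [&& indegN (val r) == 0,
      all (fun v => (v == val r) || (0 < indegN v)) (iota 0 n),
      all (fun v => (outdegN v == 0) == (v < m)) (iota 0 n),
      outdegN (val r) == 2
    & all (fun v => ~~ hybN v ==> (outdegN v != 0) ==> (outdegN v == 2)) (iota 0 n)] &&
  [&& all (fun v => hybN v ==> (outdegN v == 1) && ((indegN v == 1) || (indegN v == 2))) (iota 0 n),
      all (fun v => (indegN v == 2) ==> hybN v) (iota 0 n),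
      all (fun v => ~~ hybN v ==> (indegN v <= 1)) (iota 0 n)
    & all (fun u => hybN u ==> all (fun v => ~~ hybN v) (nth [::] ch u)) (iota 0 n)].

Definition treeN a b := arcN a b && ~~ hybN b.
Definition tcN a b := arcN a b || (arcN b a && hybN a).
Definition succS (st : nat * bool) :=
  [seq (b, st.2 || treeN st.1 b) | b <- iota 0 n & tcN st.1 b].
Fixpoint closure k (R : seq (nat * bool)) :=
  if k is k'.+1 then closure k' (undup (R ++ flatten (map succS R))) else R.
Definition closedN (R : seq (nat * bool)) :=
  all (fun st => all (fun st' => st' \in R) (succS st)) R.
Definition stc_check :=
  all (fun h => if hybN h then all (fun x => if arcN x h then
     (let R := closure (2 * n) [:: (x, false)] in
      [&& (x, false) \in R, closedN R &
          all (fun y => arcN y h ==> ((y, true) \notin R)) (iota 0 n)]) else true) (iota 0 n) else true)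
    (iota 0 n).

Lemma closed_path R (x : V) f p : closedN R -> (val x, f) \in R ->
  path (@tc_step _ net) x p ->
  (val (last x p), f || has (fun ab => @tree_arc _ net ab.1 ab.2) (zip (x :: p) p)) \in R.
Proof.
move=> cR; elim: p x f => [|y p IH] x f /=; first by rewrite orbF.
move=> hx /andP [t pp].
have hy : (val y, f || @tree_arc _ net x y) \in R.
  have /allP := allP cR _ hx; apply; apply/mapP; exists (val y) => //.
  by rewrite mem_filter memI andbT.
by have := IH y _ hy pp; rewrite orbA.
Qed.

Lemma stcN : stc_check -> @strong_time_consistent _ net.
Proof.
move=> c x y p pp lp ht [h [hh hx hy]].
have := allP c (val h) (memI h); move/implyP/(_ hh)/allP/(_ (val x) (memI x))/implyP/(_ hx).
rewrite /=; case/and3P => xR cR /allP/(_ (val y) (memI y))/implyP/(_ hy)/negP; apply.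
by have := closed_path cR xR pp; rewrite ht lp.
Qed.

Definition profN u := [seq [seq PK u s k | k <- iota 0 4] | s <- iota 0 m].

Lemma classIN : uniq (map profN (iota 0 n)) -> classI net.
Proof.
move=> U u v cv; apply: val_inj; apply: (uniq_map_in U (memI u) (memI v)).
apply/eq_in_map => s; rewrite mem_iota => /andP [_ hs]; apply: eq_map => k.
apply/idP/idP => h.
  by apply/(pk_iff v (Ordinal hs) k); apply/(cv (Ordinal hs) k); apply/(pk_iff u (Ordinal hs) k).
by apply/(pk_iff u (Ordinal hs) k); apply/(cv (Ordinal hs) k); apply/(pk_iff v (Ordinal hs) k).
Qed.

Lemma modelN : deg_check -> stc_check -> model_network net.
Proof.
case/andP => /and5P [i0 ipos lf o2 tr] /and4P [hy i2 il hc] sc; split.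
- split.
  + exact: acyclicN.
  + by rewrite indegE; apply/eqP.
  + move=> v nv; rewrite indegE; have := allV ipos v; case/orP => // /eqP e.
    by case: nv; apply: val_inj.
  + by move=> a b /(congr1 val) /= e; apply: val_inj.
  + move=> v; rewrite /is_leaf outdegE (eqP (allV lf v)); split.
      by move=> hv; exists (Ordinal hv); apply: val_inj.
    by move=> [s <-]; rewrite /= ltn_ord.
- split.
  + by rewrite outdegE; apply/eqP.
  + move=> v hv; rewrite /is_leaf !outdegE => nl.
    by have := allV tr v; move/implyP/(_ hv)/implyP/(_ nl)/eqP.
  + move=> v hv; rewrite outdegE indegE.
    have := allV hy v; move/implyP/(_ hv) => /andP [/eqP -> /orP [/eqP -> | /eqP ->]]; auto.
  + move=> v; rewrite indegE => e; have := allV i2 v; move/implyP; apply; by rewrite e.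
  + move=> v hv; rewrite indegE; have := allV il v; by move/implyP/(_ hv).
- move=> u v hu a; have := allV hc u; by move/implyP/(_ hu)/allP/(_ (val v) a).
- exact: stcN.
Qed.

End Bridge.

Definition ch3 : seq (seq nat) := [:: [::]; [::]; [::]; [::]; [::]; [::]; [::]; [::]; [::]; [::]; [::]; [::]; [::];
  [:: 24; 6]; [:: 5; 21]; [:: 14; 13]; [:: 22; 1]; [:: 23; 0]; [:: 20; 16]; [:: 17; 18]; [:: 25; 21];
  [:: 7]; [:: 4; 23]; [:: 15]; [:: 3; 25]; [:: 2]; [:: 19; 27]; [:: 8; 28]; [:: 9; 29]; [:: 10; 30]; [:: 11; 12]].
Definition ch4 : seq (seq nat) := [:: [::]; [::]; [::]; [::]; [::]; [::]; [::]; [::]; [::]; [::]; [::]; [::]; [::];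
  [:: 24; 6]; [:: 5; 21]; [:: 14; 13]; [:: 22; 20]; [:: 23; 0]; [:: 1; 16]; [:: 17; 18]; [:: 25; 21];
  [:: 7]; [:: 4; 23]; [:: 15]; [:: 3; 25]; [:: 2]; [:: 19; 27]; [:: 8; 28]; [:: 9; 29]; [:: 10; 30]; [:: 11; 12]].
Definition hl : seq nat := [:: 21; 23; 25].
Definition rk : seq nat := [:: 0; 0; 0; 0; 0; 0; 0; 0; 0; 0; 0; 0; 0; 3; 2; 4; 7; 6; 8; 9; 2; 1; 6; 5; 2; 1; 10; 4; 3; 2; 1].
Definition rt : 'I_31 := Ordinal (isT : 26 < 31).
Definition H13 : 13 <= 31 := isT.

Definition N3 := net H13 ch3 hl rt.
Definition N4 := net H13 ch4 hl rt.

Lemma cb3 : all (fun l => all (fun v => v < 31) l) ch3. Proof. vm_compute. reflexivity. Qed.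
Lemma cb4 : all (fun l => all (fun v => v < 31) l) ch4. Proof. vm_compute. reflexivity. Qed.
Lemma rk3 : all (fun u => all (fun v => rkN rk v < rkN rk u) (nth [::] ch3 u)) (iota 0 31).
Proof. vm_compute. reflexivity. Qed.
Lemma rk4 : all (fun u => all (fun v => rkN rk v < rkN rk u) (nth [::] ch4 u)) (iota 0 31).
Proof. vm_compute. reflexivity. Qed.
Lemma dg3 : deg_check 13 ch3 hl rt. Proof. vm_compute. reflexivity. Qed.
Lemma dg4 : deg_check 13 ch4 hl rt. Proof. vm_compute. reflexivity. Qed.
Lemma st3 : stc_check 31 ch3 hl. Proof. vm_compute. reflexivity. Qed.
Lemma st4 : stc_check 31 ch4 hl. Proof. vm_compute. reflexivity. Qed.
Lemma pr3 : uniq (map (profN 13 ch3 hl rk) (iota 0 31)). Proof. vm_compute. reflexivity. Qed.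
Lemma pr4 : uniq (map (profN 13 ch4 hl rk) (iota 0 31)). Proof. vm_compute. reflexivity. Qed.

Definition thL ch := [seq thN 13 ch hl rt rk v | v <- iota 0 31 & has (fun u => arcN ch u v) (iota 0 31)].
Lemma th34 : let L := thL ch4 in all (fun x => x \in L) (thL ch3). Proof. vm_compute. reflexivity. Qed.
Lemma th43 : let L := thL ch3 in all (fun x => x \in L) (thL ch4). Proof. vm_compute. reflexivity. Qed.

Definition clN ch u := [seq s <- iota 0 13 | CN ch rk u s].
Lemma ni : arcN ch3 18 20 && all (fun x => all (fun y => if arcN ch4 x y then
   ~~ ((clN ch4 x == clN ch3 18) && (clN ch4 y == clN ch3 20)) else true) (iota 0 31)) (iota 0 31).
Proof. vm_compute. reflexivity. Qed.

Lemma memI31 (x : 'I_31) : val x \in iota 0 31.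
Proof. by rewrite mem_iota ltn_ord. Qed.

Lemma th_dir chA chB
  (cbA : all (fun l => all (fun v => v < 31) l) chA)
  (cbB : all (fun l => all (fun v => v < 31) l) chB)
  (rkA : all (fun u => all (fun v => rkN rk v < rkN rk u) (nth [::] chA u)) (iota 0 31))
  (rkB : all (fun u => all (fun v => rkN rk v < rkN rk u) (nth [::] chB u)) (iota 0 31)) :
  (let L := thL chB in all (fun x => x \in L) (thL chA)) ->
  forall t, in_thetaAB (net H13 chA hl rt) t -> in_thetaAB (net H13 chB hl rt) t.
Proof.
move=> c' t; have c : all (fun x => x \in thL chB) (thL chA) := c'; move=> /(in_thetaAB_iff H13 hl rt cbA rkA) [v [hp ->]].
have : thN 13 chA hl rt rk (val v) \in thL chB.
  by apply: (allP c); apply/mapP; exists (val v) => //; rewrite mem_filter hp memI31.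
rewrite /thL; case/mapP => v'; rewrite mem_filter => /andP [hp' iv'] e.
have hv' : v' < 31 by move: iv'; rewrite mem_iota.
apply/(in_thetaAB_iff H13 hl rt cbB rkB); exists (Ordinal hv'); split; [exact: hp' | by rewrite e].
Qed.

Lemma noniso : ~ net_iso N3 N4.
Proof.
move=> [f [bf Ha Hl]].
have key : forall x : 'I_31, clN ch4 (val (f x)) = clN ch3 (val x).
  move=> x; apply: eq_in_filter => s; rewrite mem_iota => /andP [_ hs].
  have e := iso_inC' bf Ha Hl x (Ordinal hs).
  apply/idP/idP => h.
    apply/(inC_iff H13 hl rt cb3 rk3 x (Ordinal hs)); apply/e.
    exact/(inC_iff H13 hl rt cb4 rk4 (f x) (Ordinal hs)).
  apply/(inC_iff H13 hl rt cb4 rk4 (f x) (Ordinal hs)); apply/e.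
  exact/(inC_iff H13 hl rt cb3 rk3 x (Ordinal hs)).
pose a : 'I_31 := Ordinal (isT : 18 < 31).
pose b : 'I_31 := Ordinal (isT : 20 < 31).
have /andP [a3 c] := ni.
have e4 : @Defs.arc _ N4 (f a) (f b) by rewrite -Ha.
have e4' : arcN ch4 (val (f a)) (val (f b)) := e4.
move: c => /allP/(_ (val (f a)) (memI31 _))/allP/(_ (val (f b)) (memI31 _)).
have ka : clN ch4 (val (f a)) = clN ch3 18 := key a.
have kb : clN ch4 (val (f b)) = clN ch3 20 := key b.
rewrite e4' ka kb.
move=> /negP; apply; apply/andP; split; apply/eqP; reflexivity.
Qed.

Theorem mainTheorem2 :
  exists N3 N4 : network 'I_13,
    [/\ model_network N3 /\ model_network N4,
        classI N3 /\ classI N4,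
        ~ net_iso N3 N4
      & forall t, in_thetaAB N3 t <-> in_thetaAB N4 t].
Proof.
exists N3, N4; split.
- split; [exact: (modelN H13 cb3 rk3 dg3 st3) | exact: (modelN H13 cb4 rk4 dg4 st4)].
- split; [exact: (classIN cb3 rk3 pr3) | exact: (classIN cb4 rk4 pr4)].
- exact: noniso.
- move=> t; split; [exact: (th_dir cb3 cb4 rk3 rk4 th34) | exact: (th_dir cb4 cb3 rk4 rk3 th43)].
Qed.
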